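(* Let $T_1^f$, $T_2^g$ be merge trees, $\delta>0$, and let $\hat T_1^f$, $\hat T_2^g$ be the augmented trees with respect to $\delta$. For any valid pair $(S,w)$, $F(S,w) = 1$ if and only if there is a partial-$\delta$-good map $\alpha: \mathcal{F}_1(S) \to T_2(w)$.
   Context: A merge tree $T^h$ is a finite rooted tree $T$ with a continuous function $h:|T|\to\mathbb{R}$ on its underlying space (interior points of edges included), decreasing along every root-to-leaf path, modified by attaching to the root a ray upward along which $h$ increases to $+\infty$. $u \succeq v$ means $u$ is an ancestor of $v$; $u^{\varepsilon}$ is the unique ancestor of $u$ with $h(u^\varepsilon) - h(u) = \varepsilon$. Tree nodes are vertices of $T$. The depth of a point $x$ is $\mathrm{depth}(x) = \max_{y \preceq x} (h(x) - h(y))$, the maximum over descendants $y$ of $x$. Let $T_1^f, T_2^g$ be merge trees and $\delta>0$. The level at height $c$ is the set of points of the tree with function value $c$. Let $C_1 = \{f(x): x \text{ a tree node of } T_1\}$, $C_2 = \{g(y): y \text{ a tree node of } T_2\}$. The superlevels of $T_1^f$ are the levels at heights in $C_1 \cup \{c-\delta: c\in C_2\}$, and those of $T_2^g$ are the levels at heights in $\{c+\delta : c \in C_1\} \cup C_2$. Sorting by height, they are $L^1_1,\dots,L^1_m$ with heights $h_1<\dots<h_m$ and $L^2_1,\dots,L^2_m$ with heights $\hat h_i = h_i + \delta$. The augmented tree $\hat T_1^f$ (resp. $\hat T_2^g$) is obtained from $T_1^f$ (resp. $T_2^g$) by adding all points of all its superlevels as (degree-2) nodes; $L^1_m$ and $L^2_m$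 each consist of the single node $\mathrm{root}(\hat T_1^f)$, $\mathrm{root}(\hat T_2^g)$. For a node $v$ on the $i$-th superlevel, $C(v)$ denotes its children in the augmented tree (all on the $(i-1)$-th superlevel); for a set $S$, $C(S)$ is the union of the children of its nodes. A pair $(S,w)$ with $w$ a node of $\hat T_2^g$ and $S$ a set of nodes of $\hat T_1^f$ is valid if for some $j$, $S \subseteq L^1_j$, $w \in L^2_j$, and all nodes of $S$ have the same ancestor at height $h_j + 2\delta$. The feasibility $F(S,w)\in\{0,1\}$ of valid pairs is defined by induction on the superlevel index $i$ of $(S,w)$: for $i=1$, $F(S,w)=1$ iff $\mathrm{depth}(w) \le 2\delta$. For $i>1$, let $C(w) = \{w_1,\dots,w_k\}$. If $C(w)=\emptyset$, $F(S,w)=1$ iff $C(S)=\emptyset$. Otherwise $F(S,w)=1$ iff there is a partition $C(S) = S_1 \cup \dots \cup S_k$ into pairwise disjoint, possibly empty sets such that for each $j \in [1,k]$: (F-1) if $S_j \ne \emptyset$ then $(S_j,w_j)$ is a valid pair with $F(S_j,w_j)=1$; (F-2) if $S_j = \emptyset$ then $\mathrm{depth}(w_j) \le 2\delta - (\hat h_i - \hat h_{i-1})$. $\mathcal{F}_1(S)$ is the forest consisting of all subtrees of $T_1^f$ rooted at nodes of $S$, and $T_2(w)$ is the subtree of $T_2^g$ rooted at $w$. For a valid pair $(S,w)$, a continuous map $\alpha: \mathcal{F}_1(S)\to T_2(w)$ is partial-$\delta$-good if: (P1) $g(\alpha(u)) = f(u)+\delta$ for all $u \in \mathcal{F}_1(S)$;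 (P2) for $u_1,u_2 \in \mathcal{F}_1(S)$ with $\alpha(u_1)\succeq\alpha(u_2)$, we have $u_1^{2\delta} \succeq u_2^{2\delta}$ in $T_1^f$; (P3) for every $z \in T_2(w)\setminus \mathrm{Im}(\alpha)$, $|g(z^F) - g(z)| \le 2\delta$, where $z^F$ is the lowest ancestor of $z$ in $\mathrm{Im}(\alpha)$. *)

(* Defs.v *)
From mathcomp Require Import all_boot all_order all_algebra.
From mathcomp Require Import reals.
Set Implicit Arguments. Unset Strict Implicit. Unset Printing Implicit Defensive.
Import Order.TTheory GRing.Theory Num.Theory.
Local Open Scope ring_scope.

(* A merge tree T^h is given by a finite rooted tree (finite node type,      *)
(* parent map, unique root) together with the heights of the nodes; the      *)
(* function h is strictly increasing from a node to its parent.  The         *)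
(* underlying space |T| (edges + the ray above the root) is represented by   *)
(* the points (v, t) with h(v) <= t < h(parent v)  (t >= h(root) for the     *)
(* root: the ray to +oo): the point of the edge above v at height t.  Every  *)
(* merge tree is, up to height-preserving homeomorphism, of this form, since *)
(* h restricted to an edge is a homeomorphism onto an interval.              *)
Record mtree (R : realType) := MTree {
  node : finType;
  par : node -> option node;
  hv : node -> R;
  par_lt : forall u v, par u = Some v -> hv u < hv v;
  root_unique : exists r, forall v, par v = None <-> v = r
}.

Section MergeTree.
Variable R : realType.

Definition is_pt (T : mtree R) (x : node T * R) : bool :=
  (hv x.1 <= x.2) && (if par x.1 is Some p then x.2 < hv p else true).

Definition pt (T : mtree R) := {x : node T * R | is_pt x}.

Definition pnode (T : mtree R) (x : pt T) : node T := (sval x).1.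
Definition ph (T : mtree R) (x : pt T) : R := (sval x).2.

Definition nanc (T : mtree R) (u v : node T) : Prop :=
  exists n, iter n (fun o => obind (@par _ T) o) (Some v) = Some u.

Definition panc (T : mtree R) (x y : pt T) : Prop :=
  nanc (pnode x) (pnode y) /\ ph y <= ph x.

Definition anc_at (T : mtree R) (y a : pt T) (eps : R) : Prop :=
  panc a y /\ ph a - ph y = eps.

Definition depth_le (T : mtree R) (x : pt T) (c : R) : Prop :=
  forall y, panc x y -> ph x - ph y <= c.

(* The path metric of |T| is d(x,y) = 2 h(lca(x,y)) - h(x) - h(y)
   = min over common ancestors a of (2 h(a) - h(x) - h(y));
   tclose x y eta  <->  d(x,y) < eta. *)
Definition tclose (T : mtree R) (x y : pt T) (eta : R) : Prop :=
  exists a, panc a x /\ panc a y /\ 2 * ph a - ph x - ph y < eta.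

Variables (T1 T2 : mtree R) (delta : R).

(* heights h_1 < ... < h_m of the superlevels of T1 (0-indexed here:
   level k in Rocq is the (k+1)-th superlevel of the paper); the superlevels
   of T2 are at heights h_k + delta. *)
Definition levels : seq R :=
  sort <=%R (undup (map (@hv _ T1) (enum (node T1)) ++
                    map (fun v => @hv _ T2 v - delta) (enum (node T2)))).

Definition lvl (k : nat) : R := nth 0 levels k.

Definition valid (k : nat) (S : pt T1 -> Prop) (w : pt T2) : Prop :=
  (k < size levels)%N /\
  (exists s, S s) /\
  (forall s, S s -> ph s = lvl k) /\
  ph w = lvl k + delta /\
  (forall s1 s2 a1 a2, S s1 -> S s2 ->
      panc a1 s1 -> ph a1 = lvl k + 2 * delta ->
      panc a2 s2 -> ph a2 = lvl k + 2 * delta -> a1 = a2).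

Definition valid_pair (S : pt T1 -> Prop) (w : pt T2) : Prop :=
  exists k, valid k S w.

(* Feasibility F(S,w), by induction on the (0-indexed) superlevel index.
   Children of a node of the augmented tree at superlevel k+1 are the points
   of superlevel k below it. *)
Fixpoint feasible (k : nat) (S : pt T1 -> Prop) (w : pt T2) : Prop :=
  match k with
  | 0 => depth_le w (2 * delta)
  | k'.+1 =>
    let CS := fun x : pt T1 => ph x = lvl k' /\ exists s, S s /\ panc s x in
    let Cw := fun z : pt T2 => ph z = lvl k' + delta /\ panc w z in
    ((forall z, ~ Cw z) /\ (forall x, ~ CS x)) \/
    ((exists z, Cw z) /\
     exists Sj : pt T2 -> pt T1 -> Prop,
       (* C(S) is the disjoint union of the S_j, indexed by the children w_j *)
       (forall x, CS x <-> exists z, Cw z /\ Sj z x) /\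
       (forall z z', Cw z -> Cw z' -> z <> z' -> forall x, Sj z x -> ~ Sj z' x) /\
       (forall z, Cw z ->
          ((exists x, Sj z x) -> valid_pair (Sj z) z /\ feasible k' (Sj z) z) /\
          ((forall x, ~ Sj z x) ->
             depth_le z (2 * delta - ((lvl k + delta) - (lvl k' + delta))))))
  end.

Definition forest1 (S : pt T1 -> Prop) (u : pt T1) : Prop :=
  exists s, S s /\ panc s u.

Definition partial_good (S : pt T1 -> Prop) (w : pt T2)
    (alpha : pt T1 -> pt T2) : Prop :=
  let F := forest1 S in
  let Im := fun z => exists u, F u /\ alpha u = z in
  (forall u, F u -> panc w (alpha u)) /\
  (forall u, F u -> forall e, 0 < e -> exists eta, 0 < eta /\
       forall u', F u' -> tclose u u' eta -> tclose (alpha u) (alpha u') e) /\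
  (forall u, F u -> ph (alpha u) = ph u + delta) /\
  (forall u1 u2, F u1 -> F u2 -> panc (alpha u1) (alpha u2) ->
     forall a1 a2, anc_at u1 a1 (2 * delta) -> anc_at u2 a2 (2 * delta) ->
       panc a1 a2) /\
  (forall z, panc w z -> ~ Im z ->
     exists zF, (panc zF z /\ Im zF /\ (forall z', panc z' z -> Im z' -> panc z' zF))
                /\ `|ph zF - ph z| <= 2 * delta).

End MergeTree.

(* Main.v *)
Require Import Defs.
From mathcomp Require Import all_boot all_order all_algebra.
From mathcomp Require Import reals.
From mathcomp Require Import classical_sets.
From mathcomp Require Import ring lra.
From Stdlib Require Import Classical ClassicalEpsilon.
Set Implicit Arguments. Unset Strict Implicit. Unset Printing Implicit Defensive.
Import Order.TTheory GRing.Theory Num.Theory.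
Local Open Scope ring_scope.

Section Tree.
Variables (R : realType) (T : mtree R).
Implicit Types (u v p : node T) (x y z a b c : pt T).

Let up := fun o : option (node T) => obind (@par _ T) o.

Lemma iter_up_None n : iter n up None = None.
Proof. by elim: n => //= n ->. Qed.

Lemma nanc_refl v : nanc v v.
Proof. by exists 0%N. Qed.

Lemma nanc_par v p : par v = Some p -> nanc p v.
Proof. by move=> h; exists 1%N => /=. Qed.

Lemma nanc_trans (a b c : node T) : nanc a b -> nanc b c -> nanc a c.
Proof.
case=> n hn [m hm]; exists (n + m)%N; by rewrite iterD hm.
Qed.

Lemma nancS u v : nanc u v -> u = v \/ exists p, par v = Some p /\ nanc u p.
Proof.
case=> n; case: n => [|n]; first by case=> ->; left.
move=> h; right; move: h; rewrite iterSr /=.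
case E: (par v) => [p|]; last by rewrite iter_up_None.
by move=> h; exists p; split => //; exists n.
Qed.

Lemma nanc_lt u v : nanc u v -> u = v \/ hv v < hv u.
Proof.
case=> n; elim: n u => [|n IH] u /=; first by case=> ->; left.
case E: (iter n _ _) => [u'|] //= hp.
have := par_lt hp; case: (IH u' E) => [<-|h].
  by right.
by move=> h'; right; exact: lt_trans h h'.
Qed.

Lemma nanc_le u v : nanc u v -> hv v <= hv u.
Proof. by case/nanc_lt => [->|/ltW]. Qed.

Lemma nanc_antisym (a b : node T) : nanc a b -> nanc b a -> a = b.
Proof.
move=> h1 h2; case: (nanc_lt h1) => // l1; case: (nanc_lt h2) => // l2.
by have := lt_trans l1 l2; rewrite ltxx.
Qed.

Lemma nanc_chain (a b : node T) v : nanc a v -> nanc b v -> nanc a b \/ nanc b a.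
Proof.
case=> n hn [m hm]; case: (leqP n m) => hnm.
  right; exists (m - n)%N; by rewrite -hn -iterD subnK.
left; exists (n - m)%N; by rewrite -hm -iterD subnK // ltnW.
Qed.

Lemma pt_eq x y : pnode x = pnode y -> ph x = ph y -> x = y.
Proof.
destruct x as [[a1 b1] hx]; destruct y as [[c1 d1] hy]; rewrite /pnode /ph /= => e1 e2.
subst; congr exist; exact: bool_irrelevance.
Qed.

Lemma pt_lo (x : pt T) : hv (pnode x) <= ph x.
Proof. destruct x as [[a1 b1] h]; rewrite /pnode /ph /=; by move/andP: h => []. Qed.

Lemma pt_hi (x : pt T) p : par (pnode x) = Some p -> ph x < hv p.
Proof. destruct x as [[a1 b1] h]; rewrite /pnode /ph /= => E; move/andP: h => [_]; by rewrite /= E. Qed.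

Lemma mkpt_ok v t : hv v <= t -> (forall p, par v = Some p -> t < hv p) -> is_pt (T:=T) (v, t).
Proof.
move=> h1 h2; rewrite /is_pt /= h1 /=; case E: (par v) => [p|] //; exact: h2.
Qed.

Lemma mkpt v t : hv v <= t -> (forall p, par v = Some p -> t < hv p) ->
  exists x : pt T, pnode x = v /\ ph x = t.
Proof. by move=> h1 h2; exists (exist _ (v, t) (mkpt_ok h1 h2)). Qed.

Lemma panc_refl x : panc x x.
Proof. by split; [exact: nanc_refl|]. Qed.

Lemma panc_trans a b c : panc a b -> panc b c -> panc a c.
Proof.
case=> h1 l1 [h2 l2]; split; [exact: nanc_trans h1 h2 | exact: le_trans l2 l1].
Qed.

Lemma panc_le a b : panc a b -> ph b <= ph a.
Proof. by case. Qed.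

Lemma panc_antisym a b : panc a b -> panc b a -> a = b.
Proof.
case=> h1 l1 [h2 l2]; apply: pt_eq; first exact: nanc_antisym.
by apply/eqP; rewrite eq_le l1 l2.
Qed.

Lemma panc_pnode a b : panc a b -> hv (pnode a) <= ph b -> pnode a = pnode b.
Proof.
case=> h _ hl; case: (nancS h) => // -[p [hp hn]].
have := pt_hi hp; have := nanc_le hn => l1 l2.
by have := le_lt_trans (le_trans l1 hl) l2; rewrite ltxx.
Qed.

Lemma panc_pnode2 a y : panc a y ->
  (forall p, par (pnode y) = Some p -> ph a < hv p) -> pnode a = pnode y.
Proof.
case=> h _ hl; case: (nancS h) => // -[p [hp hn]].
have := hl _ hp; have := nanc_le hn; have := pt_lo a => l0 l1 l2.
by have := le_lt_trans (le_trans l1 l0) l2; rewrite ltxx.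
Qed.

Lemma panc_same a b : pnode a = pnode b -> ph b <= ph a -> panc a b.
Proof. by move=> e l; split => //; rewrite e; exact: nanc_refl. Qed.

Lemma panc_chain a b y : panc a y -> panc b y -> ph b <= ph a -> panc a b.
Proof.
case=> ha la [hb lb] l; split => //.
case: (nanc_chain ha hb) => // h.
case: (nancS h) => [->|[p [hp hn]]]; first exact: nanc_refl.
have := pt_hi hp; have := nanc_le hn; have := pt_lo b => l0 l1 l2.
have := le_lt_trans (le_trans l1 (le_trans l0 l)) l2; by rewrite ltxx.
Qed.

Lemma panc_uniq a b y : panc a y -> panc b y -> ph a = ph b -> a = b.
Proof.
move=> ha hb e; apply: panc_antisym; apply: panc_chain; eauto; by rewrite e.
Qed.

Lemma panc_eqh a b : panc a b -> ph a = ph b -> a = b.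
Proof.
move=> h e; apply: pt_eq => //; apply: panc_pnode => //; rewrite -e; exact: pt_lo.
Qed.

Lemma panc_cmp a b y : panc a y -> panc b y -> panc a b \/ panc b a.
Proof.
move=> ha hb; case: (lerP (ph b) (ph a)) => l.
  by left; apply: panc_chain ha hb l.
by right; apply: panc_chain hb ha (ltW l).
Qed.

Lemma anc_ex_node n v t : (#|[set u : node T | (hv v < hv u)%R]| < n)%N -> hv v <= t ->
  exists a : pt T, nanc (pnode a) v /\ ph a = t.
Proof.
elim: n v => [|n IH] v //= hn ht.
case E: (par v) => [p|]; last first.
  have hh : forall p, par v = Some p -> t < hv p by move=> p; rewrite E.
  have [x [e1 e2]] := @mkpt v t ht hh.
  by exists x; rewrite e1 e2; split => //; exact: nanc_refl.
case: (ltP t (hv p)) => htp.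
  have hh : forall q, par v = Some q -> t < hv q by move=> q; rewrite E => -[<-].
  have [x [e1 e2]] := @mkpt v t ht hh.
  by exists x; rewrite e1 e2; split => //; exact: nanc_refl.
have hvp := par_lt E.
have [|a [h1 h2]] := IH p _ htp; last first.
  by exists a; split => //; apply: nanc_trans h1 (nanc_par E).
rewrite -ltnS; apply: leq_trans hn; rewrite ltnS; apply: proper_card.
apply/properP; split.
  by apply/fintype.subsetP => u; rewrite !inE => h; exact: lt_trans hvp h.
by exists p; rewrite !inE ?ltxx.
Qed.

Lemma anc_ex y t : ph y <= t -> exists a : pt T, panc a y /\ ph a = t.
Proof.
move=> l; have hc : (#|[set u : node T | (hv (pnode y) < hv u)%R]| < #|node T|.+1)%N.
  by rewrite ltnS max_card.
have [a [h e]] := @anc_ex_node _ (pnode y) t hc (le_trans (pt_lo y) l).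
by exists a; split => //; split => //; rewrite e.
Qed.

Definition gapv (y : pt T) : R :=
  if par (pnode y) is Some p then hv p - ph y else 1.

Lemma gapv_gt0 y : 0 < gapv y.
Proof.
rewrite /gapv; case E: (par (pnode y)) => [p|] //; rewrite subr_gt0; exact: pt_hi.
Qed.

Lemma tclose_anc a b eta : panc a b -> ph a - ph b < eta -> tclose a b eta.
Proof.
move=> h l; exists a; split; first exact: panc_refl.
split => //; apply: le_lt_trans l; rewrite le_eqVlt; apply/orP; left; apply/eqP; ring.
Qed.

Lemma tclose_loc y y' : tclose y y' (gapv y) ->
  (ph y <= ph y' -> panc y' y) /\ (ph y' <= ph y -> panc y y').
Proof.
case=> a [ha [ha' l]].
have l1 : ph a - ph y < gapv y.
  apply: le_lt_trans l; have := panc_le ha'; lra.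
have ep : pnode a = pnode y.
  apply: panc_pnode2 => // p hp; move: l1; rewrite /gapv hp; lra.
split => hy.
  apply: panc_same; last by [].
  rewrite -ep; symmetry; apply: panc_pnode => //; rewrite ep; exact: le_trans (pt_lo y) hy.
split => //; rewrite -ep; by case: ha'.
Qed.

End Tree.

Section Levels.
Variables (R : realType) (T1 T2 : mtree R) (delta : R).
Local Notation L := (levels T1 T2 delta).
Local Notation lv := (lvl T1 T2 delta).

Lemma lv_sorted : sorted <%R L.
Proof.
rewrite lt_sorted_uniq_le sort_uniq undup_uniq /=.
apply: sort_sorted; exact: le_total.
Qed.

Lemma lv_mem1 (v : node T1) : hv v \in L.
Proof. by rewrite mem_sort mem_undup mem_cat map_f ?mem_enum. Qed.

Lemma lv_mem2 (v : node T2) : hv v - delta \in L.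
Proof.
rewrite mem_sort mem_undup mem_cat; apply/orP; right.
by apply: (map_f (fun v => hv v - delta)); rewrite mem_enum.
Qed.

Lemma lv_lt i j : (i < j)%N -> (j < size L)%N -> lv i < lv j.
Proof.
move=> hij hj; rewrite /lvl.
apply: (sorted_ltn_nth lt_trans) => //; first exact: lv_sorted.
rewrite inE; exact: ltn_trans hij hj.
Qed.

Lemma lv_le i j : (i <= j)%N -> (j < size L)%N -> lv i <= lv j.
Proof.
rewrite leq_eqVlt => /orP[/eqP -> //|h] hj; apply: ltW; exact: lv_lt.
Qed.

Lemma lv_nobetween x k : x \in L -> (k.+1 < size L)%N -> lv k < x -> x < lv k.+1 -> False.
Proof.
move=> hx hk l1 l2.
have hi : (index x L < size L)%N by rewrite index_mem.
have e : x = lv (index x L) by rewrite /lvl nth_index.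
case: (leqP (index x L) k) => h.
  have := lv_le h (ltn_trans (ltnSn k) hk); rewrite -e => h'; move: l1; rewrite ltNge h'. by [].
have := lv_le h hi; rewrite -e => h'; move: l2; by rewrite ltNge h'.
Qed.

Lemma lv_min x : x \in L -> lv 0 <= x.
Proof.
move=> hx; have hi : (index x L < size L)%N by rewrite index_mem.
have e : x = lv (index x L) by rewrite /lvl nth_index.
rewrite e; exact: lv_le.
Qed.

Lemma LV1 (u : pt T1) k : (k.+1 < size L)%N -> ph u < lv k.+1 -> hv (pnode u) <= lv k.
Proof.
move=> hk hu; rewrite leNgt; apply/negP => h.
exact: (lv_nobetween (lv_mem1 _) hk h (le_lt_trans (pt_lo u) hu)).
Qed.

Lemma LV2 (y : pt T2) k : (k.+1 < size L)%N -> ph y < lv k.+1 + delta ->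
  hv (pnode y) <= lv k + delta.
Proof.
move=> hk hu; rewrite leNgt; apply/negP => h.
have h0 := pt_lo y.
apply: (lv_nobetween (lv_mem2 (pnode y)) hk); lra.
Qed.

Lemma low1 (u : pt T1) : lv 0 <= ph u.
Proof. exact: le_trans (lv_min (lv_mem1 _)) (pt_lo u). Qed.

Lemma low2 (y : pt T2) : lv 0 + delta <= ph y.
Proof.
have h1 := lv_min (lv_mem2 (pnode y)); have h2 := pt_lo y; lra.
Qed.

End Levels.

Lemma tclose_sym (R : realType) (T : mtree R) (x y : pt T) eta :
  tclose x y eta -> tclose y x eta.
Proof.
case=> a [h1 [h2 l]]; exists a; split => //; split => //.
apply: le_lt_trans l; rewrite le_eqVlt; apply/orP; left; apply/eqP; ring.
Qed.

Section Mono.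
Variables (R : realType) (T1 T2 : mtree R) (F : pt T1 -> Prop) (alpha : pt T1 -> pt T2) (d : R).
Hypothesis Fdown : forall u v, F v -> panc v u -> F u.
Hypothesis Fcont : forall u, F u -> forall e, 0 < e -> exists eta, 0 < eta /\
       forall u', F u' -> tclose u u' eta -> tclose (alpha u) (alpha u') e.
Hypothesis FP1 : forall u, F u -> ph (alpha u) = ph u + d.

Lemma mono u v : F v -> panc v u -> panc (alpha v) (alpha u).
Proof.
move=> Fv hvu.
pose a := ph u; pose b := ph v.
have hab : a <= b by exact: panc_le.
pose Q t := forall q, panc q u -> ph q = t -> panc (alpha q) (alpha u).
pose E : set R := fun t => a <= t <= b /\ forall t', a <= t' <= t -> Q t'.
have Ea : E a.
  split; first by rewrite lexx hab.
  move=> t' /andP[h1 h2] q hq eq.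
  have -> : q = u by apply: panc_eqh => //; rewrite eq; apply/eqP; rewrite eq_le h1 h2.
  exact: panc_refl.
have hs : has_sup E.
  split; first by exists a.
  by exists b => t [/andP[_ ->]].
pose s := sup E.
have has : a <= s by apply: sup_upper_bound.
have hsb : s <= b by apply: ge_sup; [exists a | move=> t [/andP[_ ->]]].
have [qs [hqs eqs]] := anc_ex (has : ph u <= s).
have hqsv : panc v qs by apply: panc_chain hvu hqs _; rewrite eqs.
have Fqs : F qs by apply: @Fdown _ _ Fv hqsv.
have [eta [heta hc]] := @Fcont qs Fqs _ (gapv_gt0 (alpha qs)).
have Qlt : forall t', a <= t' -> t' < s -> Q t'.
  move=> t' h1 h2; have hpos : 0 < s - t' by rewrite subr_gt0.
  have [t Et lt] := @sup_adherent _ E (s - t') hpos hs.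
  case: Et => _; apply; rewrite h1 /=; move: lt; rewrite /s; lra.
have Qs : Q s.
  move=> q hq eq; have -> : q = qs by apply: panc_uniq hq hqs _; rewrite eq.
  case: (lerP s a) => hsa.
    have -> : qs = u by apply: panc_eqh hqs _; rewrite eqs; apply/eqP; rewrite eq_le hsa has.
    exact: panc_refl.
  have [t' [h1 [h2 h3]]] : exists t', a <= t' /\ t' < s /\ s - t' < eta.
    case: (lerP (s - eta / 2) a) => h.
      exists a; split => //; split => //; lra.
    exists (s - eta / 2); split; first by lra. split; lra.
  have [q' [hq' eq']] := anc_ex (h1 : ph u <= t').
  have hqq : panc qs q' by apply: panc_chain hqs hq' _; rewrite eqs eq'; lra.
  have tc : tclose qs q' eta by apply: tclose_anc => //; rewrite eqs eq'.
  have Fq' : F q' by apply: @Fdown _ _ Fqs hqq.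
  have := tclose_loc (hc _ Fq' tc) => -[_ hh].
  apply: panc_trans (hh _) (Qlt _ h1 h2 _ hq' eq').
  rewrite (@FP1 _ Fqs) (@FP1 _ Fq') eqs eq'; lra.
have esb : s = b.
  apply/eqP; rewrite eq_le hsb /=; rewrite leNgt; apply/negP => hsb'.
  have [t1 [h1 [h2 h3]]] : exists t1, s < t1 /\ t1 <= b /\ t1 - s < eta.
    case: (lerP (b - s) (eta / 2)) => h.
      exists b; split => //; split => //; lra.
    exists (s + eta / 2); split; first by lra. split; lra.
  have Et1 : E t1.
    split; first by apply/andP; split => //; lra.
    move=> t' /andP[l1 l2]; case: (ltgtP t' s) => hts.
    - exact: Qlt.
    - move=> q hq eq.
      have hqqs : panc q qs by apply: panc_chain hq hqs _; rewrite eq eqs; lra.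
      have Fq : F q by apply: @Fdown _ _ Fv _; apply: panc_chain hvu hq _; rewrite eq; move: l2 h2; rewrite /b; lra.
      have tc : tclose qs q eta by apply: tclose_sym; apply: tclose_anc => //; rewrite eq eqs; lra.
      have := tclose_loc (hc _ Fq tc) => -[hh _].
      apply: panc_trans (hh _) (Qs _ hqs eqs).
      rewrite (@FP1 _ Fqs) (@FP1 _ Fq) eqs eq; lra.
    - by rewrite hts.
  have := sup_upper_bound hs Et1; rewrite -/s; lra.
apply: Qs => //; exact: panc_refl.
Qed.
End Mono.

Section Gen.
Variables (R : realType) (T : mtree R).
Implicit Types (x y z a b : pt T).

Lemma UQ y z1 z2 : panc y z1 -> panc y z2 -> ph z1 = ph z2 -> hv (pnode y) <= ph z1 -> z1 = z2.
Proof.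
move=> h1 h2 e l; apply: pt_eq => //.
rewrite -(panc_pnode h1 l) -(panc_pnode h2) //; by rewrite -e.
Qed.

Lemma tclose_cmp p q y e : panc p y -> panc q y -> ph p - ph q < e -> ph q - ph p < e -> tclose p q e.
Proof.
move=> hp hq l1 l2; case: (panc_cmp hp hq) => h.
  exact: tclose_anc.
apply: tclose_sym; exact: tclose_anc.
Qed.

Lemma tclose_mono x y e1 e2 : tclose x y e1 -> e1 <= e2 -> tclose x y e2.
Proof. case=> a [h1 [h2 l]] le; exists a; split => //; split => //; exact: lt_le_trans le. Qed.

Lemma tclose_split x y e : tclose x y e ->
  exists a, panc a x /\ panc a y /\ ph a - ph x < e /\ ph a - ph y < e.
Proof.
case=> a [h1 [h2 l]]; exists a; split => //; split => //.
have := panc_le h1; have := panc_le h2; split; lra.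
Qed.

Lemma tclose_refl x e : 0 < e -> tclose x x e.
Proof. move=> he; apply: tclose_anc; [exact: panc_refl | by rewrite subrr]. Qed.

End Gen.

Lemma forest_down (R : realType) (T : mtree R) (S : pt T -> Prop) u v :
  forest1 S v -> panc v u -> forest1 S u.
Proof. case=> s [hs h] h'; exists s; split => //; exact: panc_trans h h'. Qed.

Lemma min3 (R : realType) (a b c : R) : 0 < a -> 0 < b -> 0 < c ->
  exists eta, 0 < eta /\ eta <= a /\ eta <= b /\ eta <= c.
Proof.
move=> ha hb hc.
case: (lerP a b) => hab; case: (lerP a c) => hac; case: (lerP b c) => hbc.
all: first [ by exists a; split => //; lra | by exists b; split => //; lra | by exists c; split => //; lra ].
Qed.

Section Main.
Variables (R : realType) (T1 T2 : mtree R) (delta : R).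
Hypothesis hd : 0 < delta.
Local Notation lv := (lvl T1 T2 delta).
Local Notation Lsz := (size (levels T1 T2 delta)).

Lemma lv_inj i j : (i < Lsz)%N -> (j < Lsz)%N -> lv i = lv j -> i = j.
Proof.
move=> hi hj e; case: (ltngtP i j) => // h.
  by have := lv_lt h hj; rewrite e ltxx.
by have := lv_lt h hi; rewrite e ltxx.
Qed.

Lemma base_fwd (S : pt T1 -> Prop) (w : pt T2) : valid delta 0 S w -> feasible delta 0 S w.
Proof.
case=> hk [_ [_ [hw _]]] /= y hy.
have := low2 T1 delta y; have := panc_le hy; rewrite hw; move: hd; lra.
Qed.

Lemma base_back (S : pt T1 -> Prop) (w : pt T2) : valid delta 0 S w ->
  exists alpha, partial_good delta S w alpha.
Proof.
case=> hk [[s0 hs0] [hS [hw hS2]]].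
have Fs : forall u, forest1 S u -> S u.
  move=> u [s [hs hsu]]; have := hS _ hs => e.
  have -> : u = s; last by [].
  symmetry; apply: (panc_eqh hsu); have := panc_le hsu; have := low1 T2 delta u; rewrite e; lra.
exists (fun _ => w); split; first by move=> *; exact: panc_refl.
split; first by move=> u _ e he; exists 1; split => // u' _ _; exact: tclose_refl.
split; first by move=> u /Fs /hS ->; rewrite hw.
split.
  move=> u1 u2 /Fs h1 /Fs h2 _ a1 a2 [ha1 e1] [ha2 e2].
  have -> : a1 = a2; last exact: panc_refl.
  apply: (hS2 u1 u2) => //.
    by move: e1; rewrite (hS _ h1); lra.
  by move: e2; rewrite (hS _ h2); lra.
move=> z hz nIm; exfalso; apply: nIm.
have -> : z = w.
  symmetry; apply: (panc_eqh hz); have := panc_le hz; have := low2 T1 delta z; rewrite hw; lra.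
exists s0; split => //; exists s0; split => //; exact: panc_refl.
Qed.


Lemma step_fwd k' (S : pt T1 -> Prop) (w : pt T2) :
  (forall (S' : pt T1 -> Prop) (w' : pt T2), valid delta k' S' w' -> (exists a, partial_good delta S' w' a) -> feasible delta k' S' w') ->
  valid delta k'.+1 S w -> forall alpha, partial_good delta S w alpha -> feasible delta k'.+1 S w.
Proof.
move=> IH [hk [[s0 hs0] [hS [hw hS2]]]] alpha [Hin [Hcont [HP1 [HP2 HP3]]]].
have hk' : (k' < Lsz)%N by exact: ltn_trans (ltnSn k') hk.
have hgap : lv k' < lv k'.+1 := lv_lt (ltnSn k') hk.
have M := mono (@forest_down _ _ S) Hcont HP1.
cbn [feasible].
pose F := forest1 S.
pose CS x := ph x = lv k' /\ exists s, S s /\ panc s x.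
pose Cw (z : pt T2) := ph z = lv k' + delta /\ panc w z.
have f1 : forall s, S s -> alpha s = w.
  move=> s hs; have Fs : F s by exists s; split => //; exact: panc_refl.
  symmetry; apply: (panc_eqh (Hin _ Fs)); by rewrite (HP1 _ Fs) hS // hw.
have FCS : forall x, CS x -> F x by move=> x [_ [s [hs h]]]; exists s.
have f2 : forall x, CS x -> Cw (alpha x).
  move=> x hx; have Fx := FCS _ hx; split; last exact: Hin _ Fx.
  by rewrite (HP1 _ Fx); case: hx => ->.
have KIm : forall z u, Cw z -> F u -> panc z (alpha u) ->
    exists x, (CS x /\ alpha x = z) /\ panc x u.
  move=> z u [hz hwz] Fu hzu.
  have hu : ph u <= lv k' by have := panc_le hzu; rewrite (HP1 _ Fu) hz; lra.
  have [x [hxu ex]] := anc_ex hu.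
  have [s [hs hsu]] := Fu.
  have hsx : panc s x by apply: panc_chain hsu hxu _; rewrite ex hS //; lra.
  have CSx : CS x by split => //; exists s.
  have hax := @M u x (FCS _ CSx) hxu.
  exists x; split => //; split => //.
  apply: panc_uniq hax hzu _; by rewrite (HP1 _ (FCS _ CSx)) ex hz.
case: (classic (exists z, Cw z)) => hC; last first.
  left; split; first by move=> z hz; apply: hC; exists z.
  by move=> x hx; apply: hC; exists (alpha x); exact: f2.
right; split => //.
exists (fun z x => CS x /\ alpha x = z); split; [|split].
- move=> x; split.
    by move=> hx; exists (alpha x); split; [exact: f2 | split].
  by case=> z [_ [hx _]].
- by move=> z z' _ _ hne x [_ e1] [_ e2]; apply: hne; rewrite -e1 -e2.
move=> z hz; split.
- case=> x0 [hx0 ex0].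
  have Vz : valid delta k' (fun x => CS x /\ alpha x = z) z.
    split => //; split; first by exists x0.
    split; first by move=> s [[]].
    split; first by case: hz.
    move=> s1 s2 a1 a2 [hs1 e1] [hs2 e2] ha1 ea1 ha2 ea2.
    have Fs1 := FCS _ hs1; have Fs2 := FCS _ hs2.
    have h1 : anc_at s1 a1 (2 * delta) by split => //; rewrite ea1; case: hs1 => -> _; ring.
    have h2 : anc_at s2 a2 (2 * delta) by split => //; rewrite ea2; case: hs2 => -> _; ring.
    apply: panc_antisym.
      by apply: (HP2 _ _ Fs1 Fs2 _ _ _ h1 h2); rewrite e1 e2; exact: panc_refl.
    by apply: (HP2 _ _ Fs2 Fs1 _ _ _ h2 h1); rewrite e1 e2; exact: panc_refl.
  split; first by exists k'.
  apply: IH => //; exists alpha.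
  pose F' := forest1 (fun x => CS x /\ alpha x = z).
  have F'F : forall u, F' u -> F u.
    move=> u [x [[hx _] hxu]]; exact: forest_down (FCS _ hx) hxu.
  split.
    move=> u [x [[hx ex] hxu]]; rewrite -ex; exact: (@M u x (FCS _ hx) hxu).
  split.
    move=> u Fu e he; have [eta [heta hc]] := Hcont u (F'F _ Fu) e he.
    by exists eta; split => // u' Fu'; apply: hc; exact: F'F.
  split; first by move=> u Fu; exact: HP1 (F'F _ Fu).
  split; first by move=> u1 u2 F1 F2; exact: HP2 (F'F _ F1) (F'F _ F2).
  move=> z0 hz0 nIm'.
  have nIm : ~ (exists u, F u /\ alpha u = z0).
    case=> u [Fu eu]; apply: nIm'.
    have [|x [hx hxu]] := KIm _ _ hz Fu; first by rewrite eu.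
    by exists u; split => //; exists x.
  have hw0 : panc w z0 := panc_trans hz.2 hz0.
  have [zF [[hF0 [ImF low]] bnd]] := HP3 z0 hw0 nIm.
  have Imz : exists u, F u /\ alpha u = z by exists x0; split => //; exact: FCS.
  have hzF : panc z zF := low z hz0 Imz.
  exists zF; split => //; split => //; split.
    case: ImF => u [Fu eu].
    have [|x [hx hxu]] := KIm _ _ hz Fu; first by rewrite eu.
    by exists u; split => //; exists x.
  move=> z' h1 [u [Fu' eu]]; apply: (low _ h1); exists u; split => //; exact: F'F.
- move=> hempty y hy.
  have nIm : ~ (exists u, F u /\ alpha u = y).
    case=> u [Fu eu]; have [|x [hx _]] := KIm _ _ hz Fu; first by rewrite eu.
    exact: hempty x hx.
  have [zF [[hF0 [[u [Fu eu]] low]] bnd]] := HP3 y (panc_trans hz.2 hy) nIm.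
  have nzF : ~ panc z zF.
    move=> h; have [|x [hx _]] := KIm _ _ hz Fu; first by rewrite eu.
    exact: hempty x hx.
  have hzFz : panc zF z by case: (panc_cmp hF0 hy).
  have hlt : ph z < ph zF.
    rewrite lt_neqAle (panc_le hzFz) andbT; apply/negP => /eqP e; apply: nzF.
    rewrite (panc_eqh hzFz (esym e)); exact: panc_refl.
  have [s [hs hsu]] := Fu.
  have hul : ph u <= lv k'.+1 by rewrite -(hS _ hs); exact: panc_le hsu.
  case: hz => [hzh hwz].
  have ephzF : ph zF = ph u + delta by rewrite -eu (HP1 _ Fu).
  have ehu : ph u = lv k'.+1.
    apply/eqP; rewrite eq_le hul /= leNgt; apply/negP => hlt2.
    have hpu := LV1 hk hlt2.
    have hh : forall p, par (pnode u) = Some p -> lv k' < hv p.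
      move=> p hp; have := pt_hi hp; lra.
    have [x [ex1 ex2]] := mkpt hpu hh.
    have hux : panc u x by apply: panc_same; [rewrite ex1 | rewrite ex2; lra].
    have CSx : CS x by split => //; exists s; split => //; exact: panc_trans hsu hux.
    have hax := @M x u Fu hux.
    apply: (hempty x); split => //.
    apply: (@UQ _ _ zF); first by rewrite -eu.
    - exact: hzFz.
    - by rewrite (HP1 _ (FCS _ CSx)) ex2 hzh.
    - rewrite (HP1 _ (FCS _ CSx)) ex2; apply: LV2 hk _; lra.
  have := ler_norm (ph zF - ph y); move: bnd; rewrite ephzF ehu hzh; lra.
Qed.

Lemma step_back k' (S : pt T1 -> Prop) (w : pt T2) :
  (forall (S' : pt T1 -> Prop) (w' : pt T2), valid delta k' S' w' -> feasible delta k' S' w' ->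
     exists a, partial_good delta S' w' a) ->
  valid delta k'.+1 S w -> feasible delta k'.+1 S w -> exists alpha, partial_good delta S w alpha.
Proof.
move=> IH [hk [[s0 hs0] [hS [hw hS2]]]]; cbn [feasible].
have hd' := hd.
have hk' : (k' < Lsz)%N by exact: ltn_trans (ltnSn k') hk.
have hgap : lv k' < lv k'.+1 := lv_lt (ltnSn k') hk.
pose F := forest1 S.
pose CS x := ph x = lv k' /\ exists s, S s /\ panc s x.
pose Cw (z : pt T2) := ph z = lv k' + delta /\ panc w z.
have Ssub : forall u, F u -> ph u <= lv k'.+1.
  by move=> u [s [hs h]]; rewrite -(hS _ hs); exact: panc_le.
have FS_eq : forall u, F u -> lv k'.+1 <= ph u -> S u.
  move=> u [s [hs h]] l; have -> : u = s; last by [].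
  symmetry; apply: (panc_eqh h); have := panc_le h; rewrite (hS _ hs); lra.
have Fs0 : F s0 by exists s0; split => //; exact: panc_refl.
have [c [hc ec]] : exists c, panc c s0 /\ ph c = lv k'.+1 + 2 * delta.
  apply: anc_ex; rewrite hS //; lra.
have cS : forall s a, S s -> panc a s -> ph a = lv k'.+1 + 2 * delta -> a = c.
  by move=> s a hs ha ea; apply: (hS2 s s0 a c).
have ancCS : forall u, F u -> ph u <= lv k' -> exists x, CS x /\ panc x u.
  move=> u [s [hs hsu]] l; have [x [hxu ex]] := anc_ex l.
  exists x; split => //; split => //; exists s; split => //.
  apply: panc_chain hsu hxu _; rewrite ex hS //; lra.
have descCS : forall u, F u -> lv k' <= ph u -> ph u < lv k'.+1 ->
    exists x, CS x /\ panc u x /\ pnode x = pnode u.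
  move=> u [s [hs hsu]] l1 l2; have hpu := LV1 hk l2.
  have hh : forall p, par (pnode u) = Some p -> lv k' < hv p.
    move=> p hp; have := pt_hi hp; lra.
  have [x [ex1 ex2]] := mkpt hpu hh.
  have hux : panc u x by apply: panc_same; [rewrite ex1 | rewrite ex2].
  exists x; split => //; split => //; exists s; split => //; exact: panc_trans hsu hux.
have ancCw : forall y, panc w y -> ph y <= lv k' + delta -> exists z, Cw z /\ panc z y.
  move=> y hwy l; have [z [hzy ez]] := anc_ex l.
  exists z; split => //; split => //.
  apply: panc_chain hwy hzy _; rewrite ez hw; lra.
have descCw : forall y, panc w y -> lv k' + delta <= ph y -> ph y < lv k'.+1 + delta ->
    exists z, Cw z /\ panc y z.
  move=> y hwy l1 l2; have hpu := LV2 hk l2.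
  have hh : forall p, par (pnode y) = Some p -> lv k' + delta < hv p.
    move=> p hp; have := pt_hi hp; lra.
  have [z [ex1 ex2]] := mkpt hpu hh.
  have hyz : panc y z by apply: panc_same; [rewrite ex1 | rewrite ex2].
  exists z; split => //; split => //; exact: panc_trans hwy hyz.
have UQ1 : forall (u x1 x2 : pt T1), ph u < lv k'.+1 -> panc u x1 -> panc u x2 ->
    ph x1 = lv k' -> ph x2 = lv k' -> x1 = x2.
  move=> u x1 x2 l h1 h2 e1 e2; apply: (UQ h1 h2); first by rewrite e1 e2.
  rewrite e1; exact: LV1 hk l.
have UQ2 : forall (y z1 z2 : pt T2), ph y < lv k'.+1 + delta -> panc y z1 -> panc y z2 ->
    ph z1 = lv k' + delta -> ph z2 = lv k' + delta -> z1 = z2.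
  move=> y z1 z2 l h1 h2 e1 e2; apply: (UQ h1 h2); first by rewrite e1 e2.
  rewrite e1; exact: LV2 hk l.
case => [[noCw noCS] | [[zz hzz] [Sj [p1 [p2 p3]]]]].
  have Fs : forall u, F u -> S u.
    move=> u Fu; apply: FS_eq => //; rewrite leNgt; apply/negP => l.
    case: (lerP (ph u) (lv k')) => l'.
      by have [x [hx _]] := ancCS u Fu l'; exact: noCS hx.
    by have [x [hx _]] := descCS u Fu (ltW l') l; exact: noCS hx.
  exists (fun _ => w); split; first by move=> *; exact: panc_refl.
  split; first by move=> u _ e he; exists 1; split => // u' _ _; exact: tclose_refl.
  split; first by move=> u /Fs /hS ->; rewrite hw.
  split.
    move=> u1 u2 /Fs h1 /Fs h2 _ a1 a2 [ha1 e1] [ha2 e2].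
    have -> : a1 = a2; last exact: panc_refl.
    apply: (hS2 u1 u2) => //.
      by move: e1; rewrite (hS _ h1); lra.
    by move: e2; rewrite (hS _ h2); lra.
  move=> z hz nIm; exfalso; apply: nIm.
  have -> : z = w.
    have hle := panc_le hz.
    have hge : ph w <= ph z.
      rewrite leNgt; apply/negP => l.
      case: (lerP (ph z) (lv k' + delta)) => l'.
        by have [z' [hz' _]] := ancCw z hz l'; exact: noCw hz'.
      have l2 : ph z < lv k'.+1 + delta by rewrite -hw.
      by have [z' [hz' _]] := descCw z hz (ltW l') l2; exact: noCw hz'.
    symmetry; apply: (panc_eqh hz); apply/eqP; by rewrite eq_le hle hge.
  by exists s0; split.
have SjCS : forall z x, Cw z -> Sj z x -> CS x.
  by move=> z x hz h; apply: (proj2 (p1 x)); exists z.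
have CSSj : forall x, CS x -> exists z, Cw z /\ Sj z x.
  by move=> x h; exact: (proj1 (p1 x)) h.
have Sj_uniq : forall z z' x, Cw z -> Cw z' -> Sj z x -> Sj z' x -> z = z'.
  move=> z z' x hz hz' h h'; case: (classic (z = z')) => // hne; exfalso.
  exact: (p2 z z' hz hz' hne x h h').
have Vj : forall z, Cw z -> (exists x, Sj z x) -> valid delta k' (Sj z) z.
  move=> z hz hne; have [[k'' V] _] := (p3 z hz).1 hne.
  have ek : k'' = k'.
    case: hne => x hx; case: (V) => hk'' [_ [hSj _]].
    apply: lv_inj => //; rewrite -(hSj x hx); exact: (SjCS _ _ hz hx).1.
  by rewrite -ek.
pose A z := epsilon (inhabits (fun _ : pt T1 => w)) (fun a => partial_good delta (Sj z) z a).
have GA : forall z, Cw z -> (exists x, Sj z x) -> partial_good delta (Sj z) z (A z).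
  move=> z hz hne; rewrite /A; apply: epsilon_spec; apply: IH; first exact: Vj.
  exact: ((p3 z hz).1 hne).2.
have SjC : forall z x1 x2 a1 a2, Cw z -> Sj z x1 -> Sj z x2 -> panc a1 x1 ->
    ph a1 = lv k' + 2 * delta -> panc a2 x2 -> ph a2 = lv k' + 2 * delta -> a1 = a2.
  move=> z x1 x2 a1 a2 hz h1 h2; have [_ [_ [_ [_ V5]]]] := Vj z hz (ex_intro _ x1 h1).
  exact: V5.
have FSj : forall z u, Cw z -> forest1 (Sj z) u -> F u.
  move=> z u hz [x [hx hxu]]; have [_ [s [hs hsx]]] := SjCS _ _ hz hx.
  by exists s; split => //; exact: panc_trans hsx hxu.
have AX : forall z x, Cw z -> Sj z x -> A z x = z.
  move=> z x hz hx; have [HinA [_ [HP1A _]]] := GA z hz (ex_intro _ x hx).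
  have Fx : forest1 (Sj z) x by exists x; split => //; exact: panc_refl.
  symmetry; apply: (panc_eqh (HinA _ Fx)).
  by rewrite (HP1A _ Fx) (SjCS _ _ hz hx).1 hz.1.
pose G u y := (ph u <= lv k' /\ exists x z, panc x u /\ Cw z /\ Sj z x /\ y = A z u)
   \/ (lv k' < ph u /\ ph u < lv k'.+1 /\ exists x z, panc u x /\ ph x = lv k' /\ Cw z /\
         Sj z x /\ panc y z /\ ph y = ph u + delta)
   \/ (lv k'.+1 <= ph u /\ y = w).
pose alpha u := epsilon (inhabits w) (G u).
have Galpha : forall u, F u -> G u (alpha u).
  move=> u Fu; apply: epsilon_spec.
  case: (lerP (ph u) (lv k')) => l1.
    have [x [hx hxu]] := ancCS u Fu l1; have [z [hz hxz]] := CSSj x hx.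
    by exists (A z u); left; split => //; exists x, z.
  case: (ltP (ph u) (lv k'.+1)) => l2.
    have [x [hx [hux _]]] := descCS u Fu (ltW l1) l2; have [z [hz hxz]] := CSSj x hx.
    have hzu : ph z <= ph u + delta by rewrite hz.1; lra.
    have [y [hyz ey]] := anc_ex hzu.
    exists y; right; left; split => //; split => //; exists x, z.
    by split => //; split; [exact: hx.1 | split].
  by exists w; right; right.
have classify : forall u, F u ->
   (ph u <= lv k' /\ exists x z, panc x u /\ Cw z /\ Sj z x /\ alpha u = A z u)
   \/ (lv k' < ph u /\ ph u < lv k'.+1 /\ exists x z, panc u x /\ ph x = lv k' /\ Cw z /\
         Sj z x /\ panc (alpha u) z /\ ph (alpha u) = ph u + delta)
   \/ (ph u = lv k'.+1 /\ S u /\ alpha u = w).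
  move=> u Fu; case: (Galpha u Fu) => [h|[h|[l e]]]; [by left|by right;left|right;right].
  split; last by split => //; exact: FS_eq.
  by apply/eqP; rewrite eq_le Ssub.
have D1 : forall z u, Cw z -> forest1 (Sj z) u -> alpha u = A z u.
  move=> z u hz Fu'; have Fu := FSj z u hz Fu'.
  case: Fu' => x [hx hxu].
  have ex : ph x = lv k' := (SjCS _ _ hz hx).1.
  have l : ph u <= lv k' by rewrite -ex; exact: panc_le hxu.
  case: (classify u Fu) => [[_ [x' [z' [hx'u [hz' [hx' ->]]]]]]|[[l1 _]|[l1 _]]].
  - have ex' := (SjCS _ _ hz' hx').1.
    have exx : x' = x by apply: panc_uniq hx'u hxu _; rewrite ex ex'.
    by rewrite exx in hx'; rewrite (Sj_uniq _ _ _ hz' hz hx' hx).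
  - exfalso; lra.
  - exfalso; lra.
have Hin : forall u, F u -> panc w (alpha u).
  move=> u Fu; case: (classify u Fu) =>
    [[_ [x [z [hxu [hz [hx ->]]]]]]|[[_ [l2 [x [z [_ [_ [hz [_ [hz' eh]]]]]]]]]|[_ [_ ->]]]].
  - have [HinA _] := GA z hz (ex_intro _ x hx).
    by apply: panc_trans hz.2 (HinA u _); exists x.
  - by apply: panc_chain hz.2 hz' _; rewrite eh hw; lra.
  - exact: panc_refl.
have HP1 : forall u, F u -> ph (alpha u) = ph u + delta.
  move=> u Fu; case: (classify u Fu) =>
    [[_ [x [z [hxu [hz [hx ->]]]]]]|[[_ [_ [x [z [_ [_ [_ [_ [_ eh]]]]]]]]]|[e [_ ->]]]].
  - have [_ [_ [HP1A _]]] := GA z hz (ex_intro _ x hx); apply: HP1A; by exists x.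
  - exact: eh.
  - by rewrite hw e.
have hgap0 : 0 < lv k'.+1 - lv k' by rewrite subr_gt0.
have Hcont : forall u, F u -> forall e, 0 < e -> exists eta, 0 < eta /\
       forall u', F u' -> tclose u u' eta -> tclose (alpha u) (alpha u') e.
  move=> u Fu e he.
  case: (classify u Fu) =>
    [[l1 [x [z [hxu [hz [hx eA]]]]]]|[[l1 [l2 [x [z [hux [ex [hz [hx [hz' eh]]]]]]]]]|[e1 [Su ew]]]].
  -
    have [HinA [HcA [HP1A _]]] := GA z hz (ex_intro _ x hx).
    have Fu1 : forest1 (Sj z) u by exists x.
    have [eta1 [heta1 hc1]] := HcA u Fu1 e he.
    have ex : ph x = lv k' := (SjCS _ _ hz hx).1.
    case: (ltP (ph u) (lv k')) => l3.
    + have hpos : 0 < lv k' - ph u by rewrite subr_gt0.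
      have [eta [h0 [h1 [h2 _]]]] := min3 heta1 hpos hpos.
      exists eta; split => // u' Fu' tc.
      have [a [ha [ha' [la la']]]] := tclose_split tc.
      have hax : panc x a by apply: panc_chain hxu ha _; rewrite ex; lra.
      have Fu1' : forest1 (Sj z) u' by exists x; split => //; exact: panc_trans hax ha'.
      rewrite eA (D1 z u' hz Fu1'); apply: hc1 => //; exact: tclose_mono tc h1.
    + have eux : x = u by apply: (panc_eqh hxu); rewrite ex; apply/eqP; rewrite eq_le l1 l3.
      have [eta [h0 [h1 [h2 h3]]]] := min3 heta1 he hgap0.
      exists eta; split => // u' Fu' tc.
      have [a [ha [ha' [la la']]]] := tclose_split tc.
      have hau : ph a < lv k'.+1 by rewrite -eux ex in la; lra.
      have hxa : panc a x by rewrite eux.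
      case: (classify u' Fu') =>
        [[l1' [x' [z' [hx'u' [hz'' [hx' eA']]]]]]|[[l1' [l2' [x' [z' [hu'x' [ex' [hz'' [hx' [hz3 eh']]]]]]]]]|[e1' _]]].
      * have ex' := (SjCS _ _ hz'' hx').1.
        have hax' : panc a x' by apply: panc_chain ha' hx'u' _; rewrite ex'; have := panc_le hxa; lra.
        have xx : x' = x by apply: (UQ1 a) => //.
        rewrite xx in hx'; have ezz := Sj_uniq _ _ _ hz'' hz hx' hx.
        have Fu1' : forest1 (Sj z) u' by exists x; split => //; rewrite -xx.
        rewrite eA (D1 z u' hz Fu1'); apply: hc1 => //; exact: tclose_mono tc h1.
      * have hax' : panc a x' := panc_trans ha' hu'x'.
        have xx : x' = x by apply: (UQ1 a) => //.
        rewrite xx in hx'; have ezz := Sj_uniq _ _ _ hz'' hz hx' hx.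
        rewrite ezz in hz3.
        rewrite eA -eux (AX z x hz hx); apply: tclose_sym; apply: tclose_anc => //.
        rewrite eh' hz.1; have := panc_le ha'; rewrite -eux ex in la; lra.
      * exfalso; have := panc_le ha'; rewrite e1'; lra.
  -
    have hp1 : 0 < ph u - lv k' by rewrite subr_gt0.
    have hp2 : 0 < lv k'.+1 - ph u by rewrite subr_gt0.
    have [eta [h0 [h1 [h2 h3]]]] := min3 he hp1 hp2.
    exists eta; split => // u' Fu' tc.
    have [a [ha [ha' [la la']]]] := tclose_split tc.
    have hu'l : ph u' <= ph a := panc_le ha'.
    have hul : ph u <= ph a := panc_le ha.
    case: (classify u' Fu') =>
      [[l1' _]|[[l1' [l2' [x' [z' [hu'x' [ex' [hz'' [hx' [hz3 eh']]]]]]]]]|[e1' _]]].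
    * exfalso; lra.
    * have xx : x' = x.
        apply: (UQ1 a) => //; first by lra.
        - exact: panc_trans ha' hu'x'.
        - exact: panc_trans ha hux.
      rewrite xx in hx'; have ezz := Sj_uniq _ _ _ hz'' hz hx' hx.
      rewrite ezz in hz3.
      apply: (tclose_cmp hz' hz3); rewrite eh eh'; lra.
    * exfalso; lra.
  -
    have [eta [h0 [h1 [h2 _]]]] := min3 he hgap0 hgap0.
    exists eta; split => // u' Fu' tc.
    have [a [ha [ha' [la la']]]] := tclose_split tc.
    have hul : ph u <= ph a := panc_le ha.
    case: (classify u' Fu') =>
      [[l1' _]|[[l1' [l2' _]]|[e1' [_ ew']]]].
    * exfalso; lra.
    * rewrite ew; apply: tclose_anc; first exact: Hin.
      rewrite (HP1 _ Fu') hw; lra.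
    * rewrite ew ew'; exact: tclose_refl.
have HP2 : forall u1 u2, F u1 -> F u2 -> panc (alpha u1) (alpha u2) ->
     forall a1 a2, anc_at u1 a1 (2 * delta) -> anc_at u2 a2 (2 * delta) -> panc a1 a2.
  move=> u1 u2 F1 F2 h a1 a2 [ha1 ea1] [ha2 ea2].
  have hph : ph u2 <= ph u1 by have := panc_le h; rewrite (HP1 _ F1) (HP1 _ F2); lra.
  have hu2k := Ssub _ F2.
  have caseS : ph u1 = lv k'.+1 -> panc a1 a2.
    move=> e1; have S1 : S u1 by apply: FS_eq => //; rewrite e1.
    have ea1c : a1 = c by apply: (cS u1) => //; lra.
    case: (F2) => s2 [hs2 hs2u].
    have hl : ph s2 <= lv k'.+1 + 2 * delta by rewrite hS //; lra.
    have [c2 [hc2 ec2]] := anc_ex hl.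
    have ec2c : c2 = c by apply: (cS s2).
    rewrite ea1c -ec2c; apply: panc_chain (panc_trans hc2 hs2u) ha2 _.
    rewrite ec2; lra.
  case: (classify u1 F1) =>
    [[l1 [x1 [z1 [hx1 [hz1 [hxz1 eA1]]]]]]|[[l1 [l2 [x1 [z1 [hux1 [ex1 [hz1 [hxz1 [hz1' eh1]]]]]]]]]|[e1 _]]]; last exact: caseS e1.
  - case: (classify u2 F2) =>
      [[l1' [x2 [z2 [hx2 [hz2 [hxz2 eA2]]]]]]|[[l1' _]|[e2 _]]].
    + have [HinA1 [_ [_ [HP2A1 _]]]] := GA z1 hz1 (ex_intro _ x1 hxz1).
      have [HinA2 _] := GA z2 hz2 (ex_intro _ x2 hxz2).
      have Fu1 : forest1 (Sj z1) u1 by exists x1.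
      have Fu2 : forest1 (Sj z2) u2 by exists x2.
      have h1 : panc z1 (alpha u2) by apply: panc_trans h; rewrite eA1; exact: HinA1.
      have h2 : panc z2 (alpha u2) by rewrite eA2; exact: HinA2.
      have ez : z1 = z2 by apply: panc_uniq h1 h2 _; rewrite hz1.1 hz2.1.
      rewrite -ez in Fu2 eA2.
      apply: (HP2A1 u1 u2 Fu1 Fu2 _ a1 a2) => //; by rewrite -eA1 -eA2.
    + exfalso; lra.
    + exfalso; lra.
  - have ex1c : ph x1 <= lv k' + 2 * delta by rewrite ex1; lra.
    have [c1 [hc1 ec1]] := anc_ex ex1c.
    have ha1x1 : panc a1 x1 := panc_trans ha1 hux1.
    have ha1c1 : panc a1 c1 by apply: panc_chain ha1x1 hc1 _; rewrite ec1; lra.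
    case: (classify u2 F2) =>
      [[l1' [x2 [z2 [hx2 [hz2 [hxz2 eA2]]]]]]|[[l1' [l2' [x2 [z2 [hux2 [ex2 [hz2 [hxz2 [hz2' eh2]]]]]]]]]|[e2 _]]].
    + have [HinA2 _] := GA z2 hz2 (ex_intro _ x2 hxz2).
      have Fu2 : forest1 (Sj z2) u2 by exists x2.
      have h2 : panc z2 (alpha u2) by rewrite eA2; exact: HinA2.
      have h12 : panc (alpha u1) z2 by apply: panc_chain h h2 _; rewrite eh1 hz2.1; lra.
      have ez : z1 = z2 by apply: (UQ2 (alpha u1)) => //; [rewrite eh1; lra | exact: hz1.1 | exact: hz2.1].
      rewrite -ez in hxz2.
      have ex2c : ph x2 <= lv k' + 2 * delta by rewrite (SjCS _ _ hz1 hxz2).1; lra.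
      have [c2 [hc2 ec2]] := anc_ex ex2c.
      have ecc : c2 = c1 by apply: (SjC z1 x2 x1) => //; rewrite ?ec1 ?ec2 ?(SjCS _ _ hz1 hxz2).1 ?ex1.
      rewrite ecc in hc2.
      apply: panc_trans ha1c1 _; apply: panc_chain (panc_trans hc2 hx2) ha2 _.
      rewrite ec1; lra.
    + have h12 : panc (alpha u1) z2 := panc_trans h hz2'.
      have ez : z1 = z2 by apply: (UQ2 (alpha u1)) => //; [rewrite eh1; lra | exact: hz1.1 | exact: hz2.1].
      rewrite -ez in hxz2.
      have ex2c : ph x2 <= lv k' + 2 * delta by rewrite ex2; lra.
      have [c2 [hc2 ec2]] := anc_ex ex2c.
      have ecc : c2 = c1 by apply: (SjC z1 x2 x1) => //; rewrite ?ec1 ?ec2 ?ex2 ?ex1.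
      rewrite ecc in hc2.
      have ha2c1 : panc a2 c1 by apply: panc_chain (panc_trans ha2 hux2) hc2 _; rewrite ec1; lra.
      apply: panc_chain ha1c1 ha2c1 _; lra.
    + exfalso; lra.
have Imw : exists u, F u /\ alpha u = w.
  exists s0; split => //.
  case: (classify s0 Fs0) => [[l _]|[[_ [l _]]|[_ [_ ->]]]] //; exfalso; move: l; rewrite hS //; lra.
have HP3 : forall z0, panc w z0 -> ~ (exists u, F u /\ alpha u = z0) ->
   exists zF, (panc zF z0 /\ (exists u, F u /\ alpha u = zF) /\
     (forall z', panc z' z0 -> (exists u, F u /\ alpha u = z') -> panc z' zF)) /\
     `|ph zF - ph z0| <= 2 * delta.
  move=> z0 hwz0 nIm.
  have hz0w := panc_le hwz0.
  case: (ltP (ph z0) (lv k'.+1 + delta)) => l0; last first.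
    exfalso; apply: nIm; have -> : z0 = w; last exact: Imw.
    symmetry; apply: (panc_eqh hwz0); apply/eqP; by rewrite eq_le hz0w hw l0.
  case: (lerP (ph z0) (lv k' + delta)) => l1.
  + have [z [hz hzz0]] := ancCw z0 hwz0 l1.
    case: (classic (exists x, Sj z x)) => hne.
    * have [HinA [_ [_ [_ HP3A]]]] := GA z hz hne.
      have nImA : ~ (exists u, forest1 (Sj z) u /\ A z u = z0).
        case=> u [Fu' eu]; apply: nIm; exists u; split; first exact: FSj Fu'.
        by rewrite (D1 z u hz Fu').
      have [zF [[hF0 [[uF [FuF euF]] lowA]] bnd]] := HP3A z0 hzz0 nImA.
      have hzzF : panc z zF by rewrite -euF; exact: HinA.
      exists zF; split => //; split => //; split.
        by exists uF; split; [exact: FSj FuF | rewrite (D1 z uF hz FuF)].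
      move=> z' hz'0 [u' [Fu' eu']].
      case: (classify u' Fu') =>
        [[l1' [x' [z'' [hx'u' [hz'' [hx' eA']]]]]]|[[l1' [l2' _]]|[_ [_ ew]]]].
      - have [HinA'' _] := GA z'' hz'' (ex_intro _ x' hx').
        have Fu1' : forest1 (Sj z'') u' by exists x'.
        have hz''z' : panc z'' z' by rewrite -eu' eA'; exact: HinA''.
        have hzz' : panc z z' by apply: panc_chain hzz0 hz'0 _; rewrite -eu' (HP1 _ Fu') hz.1; lra.
        have ezz : z'' = z by apply: panc_uniq hz''z' hzz' _; rewrite hz.1 hz''.1.
        rewrite ezz in Fu1' eA'.
        apply: (lowA _ hz'0); exists u'; split => //; by rewrite -eA'.
      - have hz'z : panc z' z by apply: panc_chain hz'0 hzz0 _; rewrite -eu' (HP1 _ Fu') hz.1; lra.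
        exact: panc_trans hz'z hzzF.
      - rewrite -eu' ew; exact: panc_trans hz.2 hzzF.
    * have hdep := (p3 z hz).2 (fun x hx => hne (ex_intro _ x hx)).
      have hb := hdep z0 hzz0.
      exists w; split; last first.
        rewrite ger0_norm; last by rewrite subr_ge0.
        move: hb; rewrite hz.1 hw; lra.
      split => //; split => //.
      move=> z' hz'0 [u' [Fu' eu']].
      case: (classify u' Fu') =>
        [[l1' [x' [z'' [hx'u' [hz'' [hx' eA']]]]]]|[[l1' [l2' [x' [z'' [hu'x' [ex' [hz'' [hx' [hz3 eh']]]]]]]]]|[_ [_ ew]]]].
      - exfalso; have [HinA'' _] := GA z'' hz'' (ex_intro _ x' hx').
        have Fu1' : forest1 (Sj z'') u' by exists x'.
        have hz''z' : panc z'' z' by rewrite -eu' eA'; exact: HinA''.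
        have hzz' : panc z z' by apply: panc_chain hzz0 hz'0 _; rewrite -eu' (HP1 _ Fu') hz.1; lra.
        have ezz : z'' = z by apply: panc_uniq hz''z' hzz' _; rewrite hz.1 hz''.1.
        rewrite ezz in hx'; exact: hne (ex_intro _ x' hx').
      - exfalso.
        have hz'z : panc z' z by apply: panc_chain hz'0 hzz0 _; rewrite -eu' (HP1 _ Fu') hz.1; lra.
        have ezz : z = z''.
          apply: (UQ2 z') => //; [rewrite -eu' eh'; lra | by rewrite -eu' | exact: hz.1 | exact: hz''.1].
        rewrite -ezz in hx'; exact: hne (ex_intro _ x' hx').
      - rewrite -eu' ew; exact: panc_refl.
  + have [z [hz hz0z]] := descCw z0 hwz0 (ltW l1) l0.
    case: (classic (exists x, Sj z x)) => hne.
    * exfalso; apply: nIm; case: hne => x hx.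
      have ex := (SjCS _ _ hz hx).1.
      have hxl : ph x <= ph z0 - delta by rewrite ex; lra.
      have [u [hux eu]] := anc_ex hxl.
      have Fu : F u.
        have [_ [s [hs hsx]]] := SjCS _ _ hz hx.
        exists s; split => //; apply: panc_chain hsx hux _; rewrite eu hS //; lra.
      exists u; split => //.
      case: (classify u Fu) =>
        [[l1' _]|[[l1' [l2' [x' [z' [hux' [ex' [hz' [hx' [hz3 eh']]]]]]]]]|[e' _]]].
      - exfalso; lra.
      - have xx : x' = x by apply: (UQ1 u) => //.
        rewrite xx in hx'; have ezz := Sj_uniq _ _ _ hz' hz hx' hx.
        rewrite ezz in hz3.
        apply: panc_uniq hz3 hz0z _; rewrite eh' eu; lra.
      - exfalso; lra.
    * have hdep := (p3 z hz).2 (fun x hx => hne (ex_intro _ x hx)).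
      have hb := hdep z (panc_refl z).
      exists w; split; last first.
        rewrite ger0_norm; last by rewrite subr_ge0.
        move: hb; rewrite hw; lra.
      split => //; split => //.
      move=> z' hz'0 [u' [Fu' eu']].
      have hz'l := panc_le hz'0.
      case: (classify u' Fu') =>
        [[l1' _]|[[l1' [l2' [x' [z'' [hu'x' [ex' [hz'' [hx' [hz3 eh']]]]]]]]]|[_ [_ ew]]]].
      - exfalso; move: hz'l; rewrite -eu' (HP1 _ Fu'); lra.
      - exfalso.
        have ezz : z = z''.
          apply: (UQ2 z') => //; [rewrite -eu' eh'; lra | exact: panc_trans hz'0 hz0z | by rewrite -eu' | exact: hz.1 | exact: hz''.1].
        rewrite -ezz in hx'; exact: hne (ex_intro _ x' hx').
      - rewrite -eu' ew; exact: panc_refl.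
exists alpha; split; first exact: Hin.
split; first exact: Hcont.
split; first exact: HP1.
split; first exact: HP2.
exact: HP3.
Qed.
End Main.

Theorem lemma1 (R : realType) (T1 T2 : mtree R) (delta : R) (hdelta : 0 < delta)
  (k : nat) (S : pt T1 -> Prop) (w : pt T2) :
  valid delta k S w ->
  (feasible delta k S w <->
   exists alpha : pt T1 -> pt T2, partial_good delta S w alpha).
Proof.
elim: k S w => [|k' IH] S w hv.
  split => _; [exact: base_back | exact: base_fwd].
split.
  apply: step_back hv => // S' w' hv' hf; exact: (proj1 (IH S' w' hv')) hf.
case=> alpha ha; apply: step_fwd hv alpha ha => // S' w' hv' he.
exact: (proj2 (IH S' w' hv')) he.
Qed.
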